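(* Let $\mathcal{M}\subseteq\mathcal{M}_1$ and $\mathbb{P}\in\mathcal{M}$. Let $\alpha$ be of the form $\alpha(Q)=\widetilde\alpha(Q)$ for $Q\in\mathcal{Q}^{\mathbb{P}}$, $\alpha(Q)=+\infty$ for $Q\in\mathcal{M}_1\setminus\mathcal{Q}^{\mathbb{P}}$, where $\mathcal{Q}^{\mathbb{P}}$ is a weak-$*$-closed subset of $\mathcal{P}^{\mathbb{P}}$, $\widetilde\alpha<\infty$ on $\mathcal{Q}^{\mathbb{P}}$ and $\inf_{\mathcal{Q}^{\mathbb{P}}}\widetilde\alpha>-\infty$. Then for all $X\in\mathcal{X}^{\mathcal{M}}\cap L^\infty(\mathbb{P})$, $\widehat\rho^{\mathcal{M}}(X)=\widehat\rho^{\mathbb{P}}(X)=\rho^{\mathbb{P}}(X)$.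
   Context: $(\Omega,\mathcal{F})$ is a measurable space, $\mathcal{M}_1$ the set of probability measures on it with the topology of weak (weak-$*$) convergence, $\mathcal{X}$ the space of pointwise bounded $\mathcal{F}$-measurable real functions, $L^\infty(P)=L^\infty(\Omega,\mathcal{F},P)$, $\mathcal{P}^P=\{Q\in\mathcal{M}_1:Q\ll P\}$. With $\alpha$ as in the claim, $\rho(X)=\sup_{Q\in\mathcal{M}_1}\{\mathbb{E}_Q[-X]-\alpha(Q)\}$ on $\mathcal{X}$ (assumed real-valued). For $P\in\mathcal{M}_1$, $X\in L^\infty(P)$: $\rho^P(X)=\inf_{\{\widetilde X\in\mathcal{X}:P(\widetilde X=X)=1\}}\rho(\widetilde X)$ and $\widehat\rho^P(X)=\sup_{Q\in\mathcal{P}^P}\{\mathbb{E}_Q[-X]-\alpha(Q)\}$. $\mathcal{X}^{\mathcal{M}}=\bigcap_{P\in\mathcal{M}}L^\infty(P)$ and $\widehat\rho^{\mathcal{M}}(X)=\sup_{P\in\mathcal{M}}\widehat\rho^P(X)$. *)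

(* Defs.v *)
From HB Require Import structures.
From mathcomp Require Import all_boot all_order all_algebra.
From mathcomp Require Import all_classical all_reals all_analysis.
Set Implicit Arguments. Unset Strict Implicit. Unset Printing Implicit Defensive.
Import Order.TTheory GRing.Theory Num.Theory.
Local Open Scope classical_set_scope.
Local Open Scope ring_scope.
Local Open Scope ereal_scope.

Section Defs.
Context {d : measure_display} {T : measurableType d} {R : realType}.

(* M_1 is the type [probability T R]. *)

Definition bdd_meas (X : T -> R) : Prop :=
  measurable_fun setT X /\ exists c : R, forall w, (`|X w| <= c)%R.

(* L^∞(P), realised as the set of measurable functions that are P-a.s. bounded
   (representatives rather than equivalence classes). *)
Definition Linf (P : probability T R) (X : T -> R) : Prop :=
  measurable_fun setT X /\ exists c : R, {ae P, forall w, (`|X w| <= c)%R}.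

Definition XM (M : set (probability T R)) (X : T -> R) : Prop :=
  forall P, M P -> Linf P X.

Definition Pabs (P : probability T R) : set (probability T R) :=
  [set Q | Q `<< P].

Definition expneg (Q : probability T R) (X : T -> R) : \bar R :=
  \int[Q]_w (- X w)%:E.

Definition rho (alpha : probability T R -> \bar R) (X : T -> R) : \bar R :=
  ereal_sup [set expneg Q X - alpha Q | Q in [set: probability T R]].

Definition rhoP (alpha : probability T R -> \bar R) (P : probability T R)
  (X : T -> R) : \bar R :=
  ereal_inf [set rho alpha Xt |
    Xt in [set Xt | bdd_meas Xt /\ P [set w | Xt w = X w] = 1]].

Definition rhohat (alpha : probability T R -> \bar R) (P : probability T R)
  (X : T -> R) : \bar R :=
  ereal_sup [set expneg Q X - alpha Q | Q in Pabs P].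

Definition rhohatM (alpha : probability T R -> \bar R)
  (M : set (probability T R)) (X : T -> R) : \bar R :=
  ereal_sup [set rhohat alpha P X | P in M].

(* Weak(-* ) topology on M_1: the coarsest topology making
   Q ↦ E_Q[f] continuous for every f ∈ 𝒳. *)
Definition weak_closed (C : set (probability T R)) : Prop :=
  forall Q0 : probability T R, ~ C Q0 ->
    exists (fs : seq (T -> R)) (eps : R),
      (0 < eps)%R /\ (forall f, f \in fs -> bdd_meas f) /\
      forall Q : probability T R,
        (forall f, f \in fs ->
           `| \int[Q]_w (f w)%:E - \int[Q0]_w (f w)%:E | < eps%:E) ->
        ~ C Q.

End Defs.

(* Main.v *)
Require Import Defs.
From HB Require Import structures.
From mathcomp Require Import all_boot all_order all_algebra.
From mathcomp Require Import all_classical all_reals all_analysis.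
From mathcomp Require Import measurable_realfun.
Import Order.TTheory GRing.Theory Num.Theory.
Local Open Scope classical_set_scope.
Local Open Scope ring_scope.
Local Open Scope ereal_scope.

Section Aux.
Context (d : measure_display) (T : measurableType d) (R : realType).

Lemma mset_eq (X Y : T -> R) : measurable_fun setT X -> measurable_fun setT Y ->
  measurable [set w | X w = Y w].
Proof.
move=> mX mY.
have h := measurable_fun_eqr mX mY.
have := h measurableT [set true] I.
rewrite setTI; congr measurable; apply/seteqP; split => w /=.
  by move/eqP.
by move=> ->; rewrite eqxx.
Qed.

Lemma expneg_eq (P Q : probability T R) (X Y : T -> R) :
  Q `<< P -> measurable_fun setT X -> measurable_fun setT Y ->
  P [set w | Y w = X w] = 1%E -> expneg Q Y = expneg Q X.
Proof.
move=> QP mX mY P1.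
have mE := mset_eq Y X mY mX.
rewrite /expneg; apply: ae_eq_integral => //.
- by apply/measurable_EFinP; apply: measurable_funN.
- by apply/measurable_EFinP; apply: measurable_funN.
apply: (null_dominates_ae_eq measurableT QP).
exists (~` [set w | Y w = X w]); split.
- exact: measurableC.
- have h := probability_setC P mE; rewrite P1 subee // in h; exact: h.
- by move=> w /= h e; apply: h => _; rewrite e.
Qed.

End Aux.

Lemma subeoo_ny (R : realType) (x : \bar R) : x - +oo = -oo.
Proof. by case: x. Qed.

Theorem corollary5p9 (d : measure_display) (T : measurableType d) (R : realType)
  (M : set (probability T R)) (P : probability T R)
  (QP : set (probability T R)) (alpha : probability T R -> \bar R) :
  M P ->
  QP `<=` Pabs P ->
  weak_closed QP ->
  (forall Q, QP Q -> alpha Q < +oo) ->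
  (forall Q, ~ QP Q -> alpha Q = +oo) ->
  -oo < ereal_inf (alpha @` QP) ->
  (forall X : T -> R, bdd_meas X -> rho alpha X \is a fin_num) ->
  forall X : T -> R, XM M X -> Linf P X ->
    rhohatM alpha M X = rhohat alpha P X /\ rhohat alpha P X = rhoP alpha P X.
Proof.
move=> MP QPsub _ _ aout _ _ X XMX LX.
have mX : measurable_fun setT X by case: LX.
have key : forall Xt, bdd_meas Xt -> P [set w | Xt w = X w] = 1 ->
    rho alpha Xt = rhohat alpha P X.
  move=> Xt [mXt _] P1; apply/eqP; rewrite eq_le; apply/andP; split.
  - apply: ge_ereal_sup => _ [Q _ <-].
    have [QQ|nQ] := pselect (QP Q); last by rewrite aout // subeoo_ny leNye.
    rewrite (@expneg_eq _ _ _ P Q X Xt (QPsub _ QQ) mX mXt P1).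
    by apply: ereal_sup_ubound; exists Q => //; exact: QPsub.
  - apply: ge_ereal_sup => _ [Q _ <-].
    have [QQ|nQ] := pselect (QP Q); last by rewrite aout // subeoo_ny leNye.
    rewrite -(@expneg_eq _ _ _ P Q X Xt (QPsub _ QQ) mX mXt P1).
    by apply: ereal_sup_ubound; exists Q.
split.
- apply/eqP; rewrite eq_le; apply/andP; split.
  + apply: ge_ereal_sup => _ [P' MP' <-]; apply: ge_ereal_sup => _ [Q QP' <-].
    have [QQ|nQ] := pselect (QP Q); last by rewrite aout // subeoo_ny leNye.
    by apply: ereal_sup_ubound; exists Q => //; exact: QPsub.
  + by apply: ereal_sup_ubound; exists P.
- have [Xt bXt PXt] : exists2 Xt, bdd_meas Xt & P [set w | Xt w = X w] = 1.
    case: LX => _ [c /= [N [mN PN0 sub]]].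
    pose Xt := (fun w => Num.max (- c) (Num.min c (X w)))%R.
    have eqXt : forall w, (`|X w| <= c)%R -> Xt w = X w.
      move=> w /ler_normlP [h1 h2]; rewrite /Xt.
      have h1' : (- c <= X w)%R by rewrite lerNl.
      by rewrite (min_r h2) (max_r h1').
    have mXt : measurable_fun setT Xt.
      apply: measurable_maxr; first exact: measurable_cst.
      by apply: measurable_minr; [exact: measurable_cst | exact: mX].
    have mS := @mset_eq _ _ _ Xt X mXt mX.
    exists Xt.
      split => //; exists `|c|%R => w; rewrite ler_norml; apply/andP; split.
        by rewrite le_max lerN2 ler_norm.
      by rewrite ge_max ge_min ler_normr lexx orbT ler_norm.
    have h0 : P (~` [set w | Xt w = X w]) = 0.
      apply: (subset_measure0 (measurableC mS) mN) => // w /= hw.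
      by apply: sub => /= hc; apply: hw; exact: eqXt.
    have h := probability_setC P (measurableC mS).
    by rewrite setCK h0 sube0 in h.
  apply/eqP; rewrite eq_le; apply/andP; split.
  + apply: le_ereal_inf_tmp => _ [Y [bY PY] <-]; by rewrite key.
  + by apply: ereal_inf_lbound; exists Xt => //; rewrite key.
Qed.
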